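(* Fix a node $v_i$. Suppose the current $0/1$ matrix $X=(x_{j,i})$ satisfies $x_{j,i}=0$ whenever $j\ne i$ and $w_{j,i}=0$, and satisfies the no-conflict constraint: for every competing pair $(v_a,v_b)\in E_c$ and every directed path $(v_{j_0},\dots,v_{j_p})$ in $\mathcal{G}_b$ with $j_0=b$, $j_p=a$, $p\ge1$, one has $\sum_{l=0}^{p-1}x_{j_l,j_{l+1}}\le p-1$. Suppose $C$ is the connectivity matrix of the data usage graph $\mathcal{G}_u$ defined by $X$. Then the procedure ILP-Solver below, run for $v_i$, terminates in time $\mathcal{O}(n^3)$ and outputs a matrix $X$ that is a feasible solution of the problem of maximizing $\sum_{j\neq i}w_{j,i}x_{j,i}$ over $\{x_{j,i}\}_{j\neq i}$: i.e., all entries of the output $X$ lie in $\{0,1\}$, $x_{j,i}=0$ whenever $w_{j,i}=0$, and the output $X$ satisfies the no-conflict constraint above.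
   Context: $\mathcal{V}=\{v_1,\dots,v_n\}$. Competing graph $\mathcal{G}_c=(\mathcal{V},E_c)$: undirected, with symmetric $0/1$ adjacency matrix $S=(s_{j,i})$, $s_{i,i}=0$. Benefit graph $\mathcal{G}_b$: directed, with nonnegative weights $W=(w_{j,i})$ and $(v_j,v_i)\in E_b$ iff $i\neq j$, $w_{j,i}>0$. Data usage graph $\mathcal{G}_u$: $(v_j,v_i)\in E_u$ iff $j\neq i$ and $x_{j,i}=1$. The connectivity matrix $C=(c_{j,i})$ of $\mathcal{G}_u$ has $c_{i,i}=1$ and, for $i\neq j$, $c_{j,i}=1$ iff there is a directed path from $v_j$ to $v_i$ in $\mathcal{G}_u$. ILP-Solver for $v_i$ (inputs $W,S,C,X$): let $\mathcal{B}_i=\{v_j\mid j\neq i, w_{j,i}>0, s_{j,i}=0\}$; sort $\mathcal{B}_i$ in non-increasing order of $w_{j,i}$. For each $v_j$ in this order, using the current $C$ compute $\mathcal{V}_j^-=\{v_k\mid c_{k,j}=1\}$, $\mathcal{S}_j^-=\{v_k\mid\exists v_p\in\mathcal{V}_j^-: s_{k,p}=1\}$, $\mathcal{S}_{i,j}^-=\{v_k\in\mathcal{S}_j^-\mid c_{i,k}=1\}$, $\mathcal{V}_i^+=\{v_k\mid c_{i,k}=1\}$, $\mathcal{S}_i^+=\{v_k\mid\exists v_p\in\mathcal{V}_i^+: s_{p,k}=1\}$, $\mathcal{S}_{i,j}^+=\{v_k\in\mathcal{S}_i^+\mid c_{k,j}=1\}$. If $\mathcal{S}_{i,j}^+=\emptyset$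 and $\mathcal{S}_{i,j}^-=\emptyset$, set $x_{j,i}\leftarrow1$, $c_{j,i}\leftarrow1$, and then for every pair $p\ne q$ in $\{1,\dots,n\}$ with $(p,q)\neq(j,i)$: if $c_{p,q}=0$, $c_{p,j}=1$ and $c_{i,q}=1$, set $c_{p,q}\leftarrow1$. Output the updated $X$ and $C$. *)

(* Defs.v *)
From mathcomp Require Import all_boot all_order all_algebra.
Set Implicit Arguments. Unset Strict Implicit. Unset Printing Implicit Defensive.
Import Order.TTheory GRing.Theory Num.Theory.

(* Nodes v_1..v_n are the ordinals 'I_n.  A 0/1 matrix is a boolean matrix;
   entry (M j i) is m_{j,i}. *)
Definition bmat (n : nat) := 'I_n -> 'I_n -> bool.

Definition upd n (M : bmat n) (j i : 'I_n) : bmat n :=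
  fun p q => ((p == j) && (q == i)) || M p q.

Definition bedge (R : realDomainType) n (W : 'I_n -> 'I_n -> R) : rel 'I_n :=
  fun j k => (j != k) && (0 < W j k)%R.

Definition uedge n (X : bmat n) : rel 'I_n := fun j k => (j != k) && X j k.

Definition conn_matrix n (X : bmat n) : bmat n :=
  fun j k => connect (uedge X) j k.

Definition support_ok (R : realDomainType) n (W : 'I_n -> 'I_n -> R) (X : bmat n) :=
  forall j k : 'I_n, j != k -> W j k = 0%R -> X j k = false.

(* No-conflict constraint: for every competing pair (v_a,v_b) in E_c and every
   directed path (v_{j_0},...,v_{j_p}) in G_b with j_0 = b, j_p = a, p >= 1,
   sum_{l<p} x_{j_l,j_{l+1}} <= p - 1.  The path is  b :: js  with p = size js. *)
Definition no_conflict (R : realDomainType) n (S : bmat n)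
    (W : 'I_n -> 'I_n -> R) (X : bmat n) :=
  forall (a b : 'I_n) (js : seq 'I_n),
    S a b -> js != [::] -> path (bedge W) b js -> last b js = a ->
    (\sum_(e <- zip (b :: js) js) (X e.1 e.2 : nat) <= (size js).-1)%N.

Definition Bset (R : realDomainType) n (W : 'I_n -> 'I_n -> R) (S : bmat n)
    (i : 'I_n) : seq 'I_n :=
  [seq j <- enum 'I_n | (j != i) && (0 < W j i)%R && ~~ S j i].

(* State of the procedure: current X, current C, and number of elementary
   steps performed so far (cost model). *)
Record state n := St { stX : bmat n; stC : bmat n; stcost : nat }.

(* the loop "for every pair p <> q with (p,q) <> (j,i): if c_{p,q} = 0,
   c_{p,j} = 1 and c_{i,q} = 1, set c_{p,q} <- 1", executed in place, pairs
   visited in lexicographic order. *)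
Definition closure_update n (C : bmat n) (j i : 'I_n) : bmat n :=
  foldl (fun (C : bmat n) (pq : 'I_n * 'I_n) =>
           let p := pq.1 in let q := pq.2 in
           if [&& p != q, (p, q) != (j, i), ~~ C p q, C p j & C i q]
           then upd C p q else C)
        C [seq (p, q) | p <- enum 'I_n, q <- enum 'I_n].

Definition ilp_step n (S : bmat n) (i : 'I_n) (st : state n) (j : 'I_n)
    : state n :=
  let X := stX st in
  let C := stC st in
  let Vjm := fun k => C k j in
  let Sjm := fun k => [exists p, Vjm p && S k p] in
  let Sijm := fun k => Sjm k && C i k in
  let Vip := fun k => C i k in
  let Sip := fun k => [exists p, Vip p && S p k] in
  let Sijp := fun k => Sip k && C k j in
  (* cost: n for V_j^-, n*n for S_j^-, n for S_{i,j}^-, n for V_i^+,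
     n*n for S_i^+, n for S_{i,j}^+, 2n for the two emptiness tests *)
  let cost := (stcost st + (n + n * n + n + n + n * n + n + n + n))%N in
  if [forall k, ~~ Sijp k] && [forall k, ~~ Sijm k] then
    St (upd X j i) (closure_update (upd C j i) j i) (cost + n * n)%N
  else St X C cost.

(* ILP-Solver for v_i with inputs S, C, X, processing B_i in the order [ord]
   (a non-increasing ordering of B_i by w_{.,i}, supplied by the caller;
   building B_i and sorting it is charged n + n*n steps). *)
Definition ilp_solver n (S : bmat n) (X C : bmat n) (i : 'I_n)
    (ord : seq 'I_n) : state n :=
  foldl (ilp_step S i) (St X C (n + n * n)%N) ord.

(* Main.v *)
Require Import Defs.
From mathcomp Require Import all_boot all_order all_algebra.
From mathcomp Require Import zify.
Import Order.TTheory GRing.Theory Num.Theory.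
Set Implicit Arguments. Unset Strict Implicit.

Lemma connect_add (T : finType) (e e' : rel T) x0 y0 :
  (forall u v, e' u v -> e u v || ((u == x0) && (v == y0))) ->
  forall x y, connect e' x y ->
  connect e x y || (connect e x x0 && connect e y0 y).
Proof.
move=> He x y /connectP [p Hp ->] {y}.
elim: p x Hp => [|z p IH] x /=; first by rewrite connect0.
case/andP => /He /orP [Hxz | /andP [/eqP -> /eqP ->]] /IH /orP [H | /andP [H1 H2]].
- by rewrite (connect_trans (connect1 Hxz) H).
- by rewrite (connect_trans (connect1 Hxz) H1) H2 orbT.
- by rewrite connect0 H orbT.
- by rewrite connect0 H2 orbT.
Qed.

Lemma sum_path_u n (X : bmat n) b p : path (uedge X) b p ->
  (\sum_(e <- zip (b :: p) p) (X e.1 e.2 : nat) = size p)%N.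
Proof.
elim: p b => [|c p IH] b /=; first by rewrite big_nil.
case/andP => /andP [_ Xbc] /IH; rewrite big_cons /= Xbc => ->.
by rewrite add1n.
Qed.

Lemma sum_le n (X : bmat n) b p :
  (\sum_(e <- zip (b :: p) p) (X e.1 e.2 : nat) <= size p)%N.
Proof.
elim: p b => [|c p IH] b /=; first by rewrite big_nil.
rewrite big_cons /=. have := IH c. have := leq_b1 (X b c). lia.
Qed.

Lemma sum_full (R : realDomainType) n (W : 'I_n -> 'I_n -> R) (X : bmat n) b p :
  path (bedge W) b p ->
  (size p <= \sum_(e <- zip (b :: p) p) (X e.1 e.2 : nat))%N ->
  path (uedge X) b p.
Proof.
elim: p b => [|c p IH] b //=.
case/andP => /andP [Hbc _] Hp. rewrite big_cons /= => H.
have Hle := sum_le X c p.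
case Xbc: (X b c) H => /= H.
- by rewrite /uedge Hbc Xbc /=; apply: IH => //; lia.
- lia.
Qed.

Definition NC n (S : bmat n) (X : bmat n) :=
  forall a b, S a b -> ~~ connect (uedge X) b a.

Lemma nc_of (R : realDomainType) n (S : bmat n) (W : 'I_n -> 'I_n -> R) X :
  (forall j, S j j = false) -> (forall j k, (0 <= W j k)%R) ->
  support_ok W X -> no_conflict S W X -> NC S X.
Proof.
move=> Sirr W0 Hs Hnc a b Sab; apply/negP => /connectP [p Hp Hl].
have Hne : p != [::].
  apply/eqP => Hp0; move: Hl; rewrite Hp0 /= => Hab.
  by rewrite Hab Sirr in Sab.
have Hb : path (bedge W) b p.
  apply: sub_path Hp => u v /andP [Huv Xuv].
  rewrite /bedge Huv /= lt_def W0 andbT.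
  apply/eqP => H0. by rewrite (Hs u v Huv H0) in Xuv.
have := Hnc a b p Sab Hne Hb (esym Hl).
rewrite sum_path_u //.
case: p {Hp Hl Hb} Hne => // c p _ /=; by rewrite ?ltnn.
Qed.

Lemma nc_to (R : realDomainType) n (S : bmat n) (W : 'I_n -> 'I_n -> R) X :
  NC S X -> no_conflict S W X.
Proof.
move=> H a b js Sab Hne Hp Hl. rewrite leqNgt; apply/negP => Hlt.
have Hu : path (uedge X) b js.
  apply: (sum_full Hp).
  by case: js Hne Hlt {Hp Hl} => //= c p _.
move/negP: (H a b Sab); apply; apply/connectP; exists js => //.
Qed.

Definition cu_f n (j i : 'I_n) := fun (C : bmat n) (pq : 'I_n * 'I_n) =>
           let p := pq.1 in let q := pq.2 in
           if [&& p != q, (p, q) != (j, i), ~~ C p q, C p j & C i q]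
           then upd C p q else C.

Lemma cu_f_mono n (j i : 'I_n) (C : bmat n) (pq : 'I_n * 'I_n) (p q : 'I_n) : C p q -> cu_f j i C pq p q.
Proof. by move=> H; rewrite /cu_f; case: ifP => // _; rewrite /upd H orbT. Qed.

Lemma cu_mono n (j i : 'I_n) L : forall (C : bmat n) p q, C p q -> foldl (cu_f j i) C L p q.
Proof.
elim: L => [|x L IH] C p q H //=. apply: IH. exact: cu_f_mono.
Qed.

Lemma cu_visit n (j i : 'I_n) p q L : forall (C : bmat n),
  (p, q) \in L -> C p j -> C i q -> p != q -> (p, q) != (j, i) ->
  foldl (cu_f j i) C L p q.
Proof.
elim: L => [|x L IH] C //=. rewrite in_cons => /orP [/eqP <- | HL] Hpj Hiq Hpq Hji.
- apply: cu_mono. case: (boolP (C p q)) => Cpq; first exact: cu_f_mono.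
  rewrite /cu_f /=.
  by rewrite Hpq Hji Cpq Hpj Hiq /= /upd !eqxx.
- apply: IH => //; exact: cu_f_mono.
Qed.

Lemma closure_ok n (X C : bmat n) (j i : 'I_n) :
  j != i ->
  (forall p q, connect (uedge X) p q -> C p q) ->
  forall p q, connect (uedge (upd X j i)) p q ->
  closure_update (upd C j i) j i p q.
Proof.
move=> Hji HC p q Hc.
have : connect (uedge X) p q || (connect (uedge X) p j && connect (uedge X) i q).
  apply: (connect_add _ Hc) => u v /andP [Huv].
  rewrite /upd /uedge Huv /= => /orP [-> | ->]; by rewrite ?orbT.
change (closure_update (upd C j i) j i) with
  (foldl (cu_f j i) (upd C j i) [seq (p, q) | p <- enum 'I_n, q <- enum 'I_n]).
case/orP => [/HC H | /andP [/HC H1 /HC H2]].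
  by apply: cu_mono; rewrite /upd H orbT.
case: (eqVneq p q) => [<- | Hpq].
  by apply: cu_mono; rewrite /upd HC ?orbT // connect0.
case: (eqVneq (p, q) (j, i)) => [[-> ->] | Hpqji].
  by apply: cu_mono; rewrite /upd !eqxx.
apply: cu_visit => //.
- by apply: allpairs_f; rewrite mem_enum.
- by rewrite /upd H1 orbT.
- by rewrite /upd H2 orbT.
Qed.

Definition Inv (R : realDomainType) n (S : bmat n) (W : 'I_n -> 'I_n -> R)
  (st : state n) :=
  [/\ support_ok W (stX st), NC S (stX st) &
      forall p q, connect (uedge (stX st)) p q -> stC st p q].

Lemma step_inv (R : realDomainType) n (S : bmat n) (W : 'I_n -> 'I_n -> R) i st j :
  j != i -> (0 < W j i)%R -> Inv S W st -> Inv S W (ilp_step S i st j).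
Proof.
case: st => X C c /= Hji Wji [Hs Hnc HC] /=.
rewrite /ilp_step /=. case: ifP => //.
case/andP => /forallP Hp _; split => /=.
- move=> p q Hpq Wpq; rewrite /upd.
  case: (boolP ((p == j) && (q == i))) => [/andP [/eqP Ep /eqP Eq] | _] /=.
    by subst; rewrite Wpq ltxx in Wji.
  exact: Hs.
- move=> a b Sab; apply/negP => Hc.
  have : connect (uedge X) b a || (connect (uedge X) b j && connect (uedge X) i a).
    apply: (connect_add _ Hc) => u v /andP [Huv].
    rewrite /upd /uedge Huv /= => /orP [-> | ->]; by rewrite ?orbT.
  case/orP => [H | /andP [/HC /= H1 /HC /= H2]].
    by move/negP: (Hnc a b Sab).
  move: (Hp b) => /=; rewrite H1 andbT negbK => /existsP; apply.
  by exists a; rewrite H2 Sab.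
- exact: closure_ok.
Qed.

Lemma fold_inv (R : realDomainType) n (S : bmat n) (W : 'I_n -> 'I_n -> R) i L :
  forall st, all (fun j => (j != i) && (0 < W j i)%R) L -> Inv S W st ->
  Inv S W (foldl (ilp_step S i) st L).
Proof.
elim: L => [|x L IH] st //= /andP [/andP [H1 H2] HL] Hinv.
apply: IH => //. exact: step_inv.
Qed.

Lemma fold_cost n (S : bmat n) i L : forall st,
  (stcost (foldl (ilp_step S i) st L) <= stcost st + size L * (6 * n + 3 * (n * n)))%N.
Proof.
elim: L => [|x L IH] st /=; first lia.
have := IH (ilp_step S i st x).
have : (stcost (ilp_step S i st x) <= stcost st + (6 * n + 3 * (n * n)))%N.
  by rewrite /ilp_step; case: ifP => _ /=; lia.
lia.
Qed.

Lemma arith_bound n : (n + n * n + n * (6 * n + 3 * (n * n)) <= 11 * n ^ 3)%N.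
Proof. case: n => [|m] //. rewrite expnS expnS expn1. nia. Qed.

Theorem proposition2 :
  exists K : nat,
  forall (R : realDomainType) (n : nat) (S : bmat n)
         (W : 'I_n -> 'I_n -> R) (X C : bmat n) (i : 'I_n) (ord : seq 'I_n),
    (forall j k, S j k = S k j) ->
    (forall j, S j j = false) ->
    (forall j k, (0 <= W j k)%R) ->
    support_ok W X ->
    no_conflict S W X ->
    (forall j k, C j k = conn_matrix X j k) ->
    perm_eq ord (Bset W S i) ->
    sorted (fun j k => (W k i <= W j i)%R) ord ->
    let out := ilp_solver S X C i ord in
    [/\ (stcost out <= K * n ^ 3)%N,
        support_ok W (stX out)
      & no_conflict S W (stX out)].
Proof.
exists 11 => R n S W X C i ord Ssym Sirr W0 Hs Hnc HC Hperm _ out.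
have Hall : all (fun j => (j != i) && (0 < W j i)%R) ord.
  apply/allP => j; rewrite (perm_mem Hperm) mem_filter => /andP [].
  by case/andP => /andP [-> ->].
have Hsz : (size ord <= n)%N.
  rewrite (perm_size Hperm) /Bset.
  rewrite size_filter; apply: leq_trans (count_size _ _) _. by rewrite size_enum_ord.
have Hinv : Inv S W out.
  apply: fold_inv => //; split => //=.
  - exact: (nc_of Sirr W0 Hs Hnc).
  - by move=> p q Hpq; rewrite HC.
case: Hinv => H1 H2 _; split => //; last exact: nc_to.
have := fold_cost S i ord (St X C (n + n * n)%N). rewrite /= -/out.
move=> H.
have H3 : (n + n * n + size ord * (6 * n + 3 * (n * n)) <= 11 * n ^ 3)%N.
  apply: leq_trans (arith_bound n).
  by rewrite leq_add2l leq_mul2r Hsz orbT.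
exact: leq_trans H H3.
Qed.
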